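(* Let $I^h\subset\mathbb{K}[S_M^h]$ be a homogeneous ideal, $G$ a sparse Gröbner basis of $I^h$ with respect to $\prec_h$ consisting of homogeneous polynomials, and $D\in\mathbb{N}$. Let $\mathcal{N}$ be the set of monomials $X^{(s,D)}\in\mathbb{K}[S_M^h]_D$ for which some $g\in G$ satisfies $\mathrm{LM}_{\prec_h}(g)\mid_\delta X^{(s,D)}$. Associate to each $X^{(s,D)}\in\mathcal{N}$ exactly one such $g$, and let $\mathcal{R}$ be the set of polynomials $X^t\cdot g$, where $X^{(s,D)}\in\mathcal{N}$, $g$ is its associated polynomial and $X^t$ is the monomial with $X^t\cdot\mathrm{LM}_{\prec_h}(g)=X^{(s,D)}$ and $\delta(X^t)+\delta(\mathrm{LM}_{\prec_h}(g))=\delta(X^{(s,D)})$. Let $\mathcal{M}'_D$ be the Macaulay matrix with columns indexed by all monomials of $\mathbb{K}[S_M^h]_D$ in decreasing order for $\prec_h$ and rows indexed by $\mathcal{R}$, and let $\mathcal{M}_D$ be the Macaulay matrix with the same columns and rows indexed by all products $X^{(u,D-\deg g)}\cdot g$ with $g\in G$ and $X^{(u,D-\deg g)}$ a monomial of $\mathbb{K}[S_M^h]_{D-\deg g}$. Let $\widetilde{\mathcal{M}'_D}$ and $\widetilde{\mathcal{M}_D}$ be their reduced row echelon forms. Then $\mathrm{Rows}(\widetilde{\mathcal{M}'_D})=\mathrm{Rows}(\widetilde{\mathcal{M}_D})$. Moreover, $\mathcal{M}'_D$ is full-rank and in row echelon form.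
   Context: Let $\mathbb{K}$ be a field of characteristic $0$, $M\subset\mathbb{R}^n$ a polytope with $0\in M$, $S_M\subset\mathbb{Z}^n$ the affine semigroup generated by $M\cap\mathbb{Z}^n$ and $S_M^h\subset\mathbb{Z}^{n+1}$ the one generated by $\{(s,1):s\in M\cap\mathbb{Z}^n\}$, both assumed pointed. $\mathbb{K}[S]$ is the semigroup algebra with monomials $X^s$, $X^sX^t=X^{s+t}$; $\mathbb{K}[S_M^h]$ is graded by $\deg X^{(s,d)}=d$, $\mathbb{K}[S_M^h]_d$ is the degree-$d$ part, and ''homogeneous'' refers to this grading. $\chi:\mathbb{K}[S_M^h]\to\mathbb{K}[S_M]$, $X^{(s,d)}\mapsto X^s$. The affine degree $\delta^A(X^s)$ is the least $d$ with $(s,d)\in S_M^h$, extended to polynomials by the maximum over the support; the sparse degree of $f\in\mathbb{K}[S_M^h]$ is $\delta(f)=\delta^A(\chi(f))$. Fix a monomial order $<_M$ on $\mathbb{K}[S_M]$; the sparse order is $X^s\prec X^r$ iff $\delta^A(X^s)<\delta^A(X^r)$, or equality and $X^s<_MX^r$; the graded sparse order is $X^{(s,d)}\prec_hX^{(r,d')}$ iff $d<d'$, or $d=d'$ and $X^s\prec X^r$. Divisibility: $X^{(s,d_s)}\mid_\delta X^{(r,d_r)}$ if some monomial $X^{(t,d_t)}$ satisfies $X^{(s,d_s)}X^{(t,d_t)}=X^{(r,d_r)}$ and $\delta(X^{(s,d_s)})+\delta(X^{(t,d_t)})=\delta(X^{(r,d_r)})$. A sparse Gröbner basis of $I^h$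 w.r.t. $\prec_h$ is a subset of $I^h$ generating $I^h$ such that every nonzero $f\in I^h$ has some element $g$ of it with $\mathrm{LM}_{\prec_h}(g)\mid_\delta\mathrm{LM}_{\prec_h}(f)$. A Macaulay matrix has columns indexed by monomials (containing all monomials in the supports of the row polynomials) and rows indexed by polynomials; the entry at (row $f$, column $m$) is the coefficient of $m$ in $f$. $\mathrm{Rows}(\mathcal{M})$ is the set of nonzero polynomials represented by the rows of $\mathcal{M}$. *)

(* Defs.v *)
From HB Require Import structures.
From mathcomp Require Import all_boot all_order all_algebra.
From mathcomp Require Import finmap.
From mathcomp.multinomials Require Import monalg.
From Stdlib Require Import ClassicalEpsilon.

Set Implicit Arguments.
Unset Strict Implicit.
Unset Printing Implicit Defensive.

Import Order.TTheory GRing.Theory Num.Theory.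
Local Open Scope ring_scope.

Definition pb (P : Prop) : bool :=
  if excluded_middle_informative P then true else false.

Section Setup.
Variable n : nat.

(* exponents of K[S_M^h] : pairs (s, d) with s in Z^n and d in N *)
Definition expo : Type := ('rV[int]_n * nat)%type.
Definition eadd (a b : expo) : expo := (a.1 + b.1, (a.2 + b.2)%N).
(* exponent difference (used only when b divides a) *)
Definition esub (a b : expo) : expo := (a.1 - b.1, (a.2 - b.2)%N).
Definition e0 : expo := (0, 0%N).

Definition in_conv (R : realFieldType) (V : seq 'rV[R]_n) (x : 'rV[R]_n) : Prop :=
  exists w : 'I_(size V) -> R,
    [/\ forall i, 0 <= w i, \sum_i w i = 1 & x = \sum_i w i *: V`_i].

(* A lists (without repetition) the lattice points M cap Z^n of M = conv(V) *)
Definition lattice_points_of (R : realFieldType) (V : seq 'rV[R]_n)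
    (A : seq 'rV[int]_n) : Prop :=
  uniq A /\ forall s : 'rV[int]_n,
    s \in A <-> in_conv V (map_mx (fun z : int => z%:~R) s).

Definition sums (A : seq 'rV[int]_n) (d : nat) : seq 'rV[int]_n :=
  iter d (fun L => [seq a + l | a <- A, l <- L]) [:: 0].

(* (s,d) in S_M^h = semigroup generated by {(a,1) : a in A} *)
Definition inSh (A : seq 'rV[int]_n) (e : expo) : bool := e.1 \in sums A e.2.

Definition inS (A : seq 'rV[int]_n) (s : 'rV[int]_n) : Prop :=
  exists d, s \in sums A d.

Definition S_pointed (A : seq 'rV[int]_n) : Prop :=
  forall s t, inS A s -> inS A t -> s + t = 0 -> s = 0.
Definition Sh_pointed (A : seq 'rV[int]_n) : Prop :=
  forall e f, inSh A e -> inSh A f -> eadd e f = e0 -> e = e0.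

Definition deltaA (A : seq 'rV[int]_n) (s : 'rV[int]_n) : nat :=
  match excluded_middle_informative (exists d, (fun d => inSh A (s, d)) d) with
  | left P => ex_minn P
  | right _ => 0%N
  end.
Definition delta (A : seq 'rV[int]_n) (e : expo) : nat := deltaA A e.1.

Definition monomial_order (A : seq 'rV[int]_n) (ltM : rel 'rV[int]_n) : Prop :=
  [/\ (forall s, inS A s -> ~~ ltM s s),
      (forall s t u, inS A s -> inS A t -> inS A u ->
          ltM s t -> ltM t u -> ltM s u),
      (forall s t, inS A s -> inS A t -> s != t -> ltM s t || ltM t s),
      (forall s t u, inS A s -> inS A t -> inS A u ->
          ltM s t -> ltM (s + u) (t + u))
    & well_founded (fun s t => inS A s /\ ltM s t)].

Definition sp_lt (A : seq 'rV[int]_n) (ltM : rel 'rV[int]_n) (s r : 'rV[int]_n)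
  : bool :=
  (deltaA A s < deltaA A r)%N || ((deltaA A s == deltaA A r) && ltM s r).

Definition gsp_lt (A : seq 'rV[int]_n) (ltM : rel 'rV[int]_n) (e f : expo)
  : bool :=
  (e.2 < f.2)%N || ((e.2 == f.2) && sp_lt A ltM e.1 f.1).

Variable K : fieldType.

(* finitely supported K-linear combinations of monomials X^e, e in Z^n x N *)
Definition spoly : Type := {malg K[expo]}.
Definition Xm (e : expo) : spoly := << e >>.

Definition pmul (f g : spoly) : spoly :=
  \sum_(a <- msupp f) \sum_(b <- msupp g) << f@_a * g@_b *g eadd a b >>.

Definition inKSh (A : seq 'rV[int]_n) (f : spoly) : Prop :=
  forall e, e \in msupp f -> inSh A e.

Definition homog (f : spoly) : Prop :=
  exists d, forall e, e \in msupp f -> e.2 = d.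
Definition pdeg (f : spoly) : nat := \max_(e <- msupp f) e.2.

Definition hcomp (f : spoly) (d : nat) : spoly :=
  \sum_(e <- msupp f | e.2 == d) << f@_e *g e >>.

Definition is_ideal (A : seq 'rV[int]_n) (I : spoly -> Prop) : Prop :=
  [/\ (forall f, I f -> inKSh A f), I 0,
      (forall f g, I f -> I g -> I (f + g))
    & (forall r f, inKSh A r -> I f -> I (pmul r f))].

Definition homog_ideal (A : seq 'rV[int]_n) (I : spoly -> Prop) : Prop :=
  is_ideal A I /\ forall f d, I f -> I (hcomp f d).

Definition LM (A : seq 'rV[int]_n) (ltM : rel 'rV[int]_n) (f : spoly) : expo :=
  foldl (fun acc m => if gsp_lt A ltM acc m then m else acc)
        (head e0 (msupp f)) (msupp f).

Definition ddvd (A : seq 'rV[int]_n) (e r : expo) : Prop :=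
  exists t, [/\ inSh A t, eadd e t = r & (delta A e + delta A t)%N = delta A r].

Definition sparse_GB (A : seq 'rV[int]_n) (ltM : rel 'rV[int]_n)
    (I : spoly -> Prop) (G : seq spoly) : Prop :=
  [/\ (forall g, g \in G -> I g),
      (forall f, I f -> exists rs : seq spoly,
          [/\ size rs = size G, forall r, r \in rs -> inKSh A r
            & f = \sum_(i < size G) pmul rs`_i G`_i])
    & (forall f, I f -> f != 0 ->
          exists2 g, g \in G & g != 0 /\ ddvd A (LM A ltM g) (LM A ltM f))].

Definition macaulay (rows : seq spoly) (cols : seq expo)
  : 'M[K]_(size rows, size cols) :=
  \matrix_(i, j) (rows`_i)@_(nth e0 cols j).

Definition row_poly (cols : seq expo) m (M : 'M[K]_(m, size cols)) (i : 'I_m)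
  : spoly := \sum_(j < size cols) << M i j *g nth e0 cols j >>.

Definition Rows (cols : seq expo) m (M : 'M[K]_(m, size cols)) : spoly -> Prop :=
  fun p => p != 0 /\ exists i, p = row_poly M i.

(* pivot position: index of first nonzero entry of row i (c if zero row) *)
Definition piv m c (M : 'M[K]_(m, c)) (i : 'I_m) : nat :=
  find (fun j : 'I_c => M i j != 0) (enum 'I_c).

Definition row_echelon m c (M : 'M[K]_(m, c)) : Prop :=
  forall i1 i2 : 'I_m, (i1 < i2)%N -> (piv M i2 < c)%N ->
    (piv M i1 < piv M i2)%N.

Definition reduced_row_echelon m c (M : 'M[K]_(m, c)) : Prop :=
  row_echelon M /\
  forall (i : 'I_m) (j : 'I_c), nat_of_ord j = piv M i ->
    M i j = 1 /\ forall i' : 'I_m, i' != i -> M i' j = 0.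

Definition rref_of m c (M N : 'M[K]_(m, c)) : Prop :=
  reduced_row_echelon N /\ (N == M)%MS.

End Setup.

(* Main.v *)
Require Import Defs.
From HB Require Import structures.
From mathcomp Require Import all_boot all_order all_algebra.
From mathcomp Require Import finmap.
From mathcomp.multinomials Require Import monalg.
From Stdlib Require Import ClassicalEpsilon.

Set Implicit Arguments.
Unset Strict Implicit.
Unset Printing Implicit Defensive.
Import Order.TTheory GRing.Theory Num.Theory.
Local Open Scope ring_scope.

Lemma foldl_max (T : eqType) (lt : rel T) (P : pred T) (acc : T) (l : seq T) :
  (forall x y z, P x -> P y -> P z -> lt x y -> lt y z -> lt x z) ->
  (forall x y, P x -> P y -> x != y -> lt x y || lt y x) ->
  all P (acc :: l) ->
  let r := foldl (fun acc m => if lt acc m then m else acc) acc l in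
  r \in acc :: l /\ forall y, y \in acc :: l -> y = r \/ lt y r.
Proof.
move=> tr tot; elim: l acc => [|x l IH] acc /=.
  rewrite andbT => _; split; first by rewrite inE.
  by move=> y; rewrite inE => /eqP ->; left.
case/and3P => Pa Px Pl.
case Hax: (lt acc x).
  have Pxl : all P (x :: l) by rewrite /= Px.
  have [H1 H2] := IH x Pxl.
  have Pr := allP Pxl _ H1.
  split; first by rewrite inE H1 orbT.
  move=> y; rewrite inE => /orP [/eqP->|Hy]; last exact: H2.
  case: (H2 x (mem_head _ _)) => [<-|Hxr]; first by right.
  by right; exact: (tr _ _ _ Pa Px Pr Hax Hxr).
have Pal : all P (acc :: l) by rewrite /= Pa.
have [H1 H2] := IH acc Pal.
have Pr := allP Pal _ H1.
split.
  by move: H1; rewrite !inE => /orP [->|->]; rewrite ?orbT.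
move=> y; rewrite !inE => /or3P [/eqP->|/eqP->|Hy].
- by apply: H2; rewrite inE eqxx.
- case: (eqVneq x acc) => [->|Hne]; first by apply: H2; rewrite inE eqxx.
  have := tot _ _ Px Pa Hne; rewrite Hax orbF => Hxa.
  case: (H2 acc (mem_head _ _)) => [<-|Har]; first by right.
  by right; exact: (tr _ _ _ Px Pa Pr Hxa Har).
- by apply: H2; rewrite inE Hy orbT.
Qed.
Section Basics.
Variable n : nat.
Variable A : seq 'rV[int]_n.
Variable ltM : rel 'rV[int]_n.

Lemma sums_add a b x y : x \in sums A a -> y \in sums A b -> x + y \in sums A (a + b).
Proof.
elim: a x => [|a IH] x /=.
  by rewrite inE => /eqP ->; rewrite add0r.
move=> /allpairsP [[a0 l] /= [Ha Hl ->]] Hy.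
rewrite -addrA; apply: allpairs_f => //; exact: IH.
Qed.

Lemma inSh_add (e f : expo n) : inSh A e -> inSh A f -> inSh A (eadd e f).
Proof. rewrite /inSh /eadd /=; exact: sums_add. Qed.

Lemma pbP (P : Prop) : P -> pb P.
Proof. by rewrite /pb; case: excluded_middle_informative. Qed.
Lemma pbE (P : Prop) : pb P -> P.
Proof. by rewrite /pb; case: excluded_middle_informative. Qed.

Lemma deltaA_spec s d : inSh A (s, d) ->
  inSh A (s, deltaA A s) /\ (deltaA A s <= d)%N.
Proof.
move=> H; rewrite /deltaA; case: excluded_middle_informative => [P|nP]; last first.
  by exfalso; apply: nP; exists d.
case: ex_minnP => m Hm Hmin; split => //; exact: Hmin.
Qed.

Lemma deltaA_add s t : inS A s -> inS A t ->
  (deltaA A (s + t) <= deltaA A s + deltaA A t)%N.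
Proof.
move=> [ds Hs] [dt Ht].
have [Hs' _] := @deltaA_spec s ds Hs.
have [Ht' _] := @deltaA_spec t dt Ht.
have := inSh_add Hs' Ht'; rewrite /eadd /= => H.
by case: (deltaA_spec H).
Qed.

Definition inShb (e : expo n) := inSh A e.

Hypothesis Hmo : monomial_order A ltM.

Lemma inSh_inS (e : expo n) : inSh A e -> inS A e.1.
Proof. by move=> H; exists e.2. Qed.

Lemma gsp_irr e : inSh A e -> ~~ gsp_lt A ltM e e.
Proof.
case: Hmo => irr _ _ _ _ H.
rewrite /gsp_lt /sp_lt ltnn eqxx ltnn eqxx /=; exact: (irr _ (inSh_inS H)).
Qed.

Lemma gsp_trans e f g : inSh A e -> inSh A f -> inSh A g ->
  gsp_lt A ltM e f -> gsp_lt A ltM f g -> gsp_lt A ltM e g.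
Proof.
case: Hmo => _ tr _ _ _ He Hf Hg.
rewrite /gsp_lt /sp_lt.
case/orP => [H1|/andP [/eqP H1 H1']]; case/orP => [H2|/andP [/eqP H2 H2']].
- by rewrite (ltn_trans H1 H2).
- by rewrite -H2 H1.
- by rewrite H1 H2.
apply/orP; right; rewrite H1 H2 eqxx /=.
case/orP: H1' => [D1|/andP [/eqP D1 D1']]; case/orP: H2' => [D2|/andP [/eqP D2 D2']].
- by rewrite (ltn_trans D1 D2).
- by rewrite -D2 D1.
- by rewrite D1 D2.
by rewrite D1 D2 eqxx (tr _ _ _ (inSh_inS He) (inSh_inS Hf) (inSh_inS Hg) D1' D2') orbT.
Qed.

Lemma gsp_total e f : inSh A e -> inSh A f -> e != f ->
  gsp_lt A ltM e f || gsp_lt A ltM f e.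
Proof.
case: Hmo => _ _ tot _ _ He Hf Hef.
rewrite /gsp_lt /sp_lt.
case: (ltngtP e.2 f.2) => // E2 /=.
case: (ltngtP (deltaA A e.1) (deltaA A f.1)) => // E1 /=.
apply: tot; [exact: inSh_inS|exact: inSh_inS|].
apply: contra Hef => /eqP E; apply/eqP.
by case: e f E E2 {He Hf E1} => [e1 e2] [f1 f2] /= -> ->.
Qed.

Lemma gsp_shift e L t : inSh A e -> inSh A L -> inSh A t ->
  deltaA A (L.1 + t.1) = (deltaA A L.1 + deltaA A t.1)%N ->
  gsp_lt A ltM e L -> gsp_lt A ltM (eadd t e) (eadd t L).
Proof.
case: Hmo => _ _ _ comp _ He HL Ht Hd.
rewrite /gsp_lt /sp_lt /eadd /=.
case/orP => [H1|/andP [/eqP H1 H1']].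
  by rewrite ltn_add2l H1.
rewrite H1 ltnn eqxx /=.
have Hle := deltaA_add (inSh_inS Ht) (inSh_inS He).
rewrite [t.1 + L.1]addrC Hd.
case/orP: H1' => [D1|/andP [/eqP D1 D1']].
  by rewrite (leq_ltn_trans Hle) // addnC ltn_add2r.
rewrite D1 addnC in Hle.
case: (ltngtP (deltaA A (t.1 + e.1)) (deltaA A L.1 + deltaA A t.1)%N) => //.
  by rewrite ltnNge Hle.
move=> _ /=.
rewrite [t.1 + e.1]addrC.
exact: comp (inSh_inS He) (inSh_inS HL) (inSh_inS Ht) D1'.
Qed.

End Basics.
Section Generic.
Variable T : choiceType.
Variable K : fieldType.
Variable add : T -> T -> T.
Definition pm (f g : {malg K[T]}) : {malg K[T]} :=
  \sum_(a <- msupp f) \sum_(b <- msupp g) << f@_a * g@_b *g add a b >>.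

Lemma mcoeff_sum (I : Type) (r : seq I) (F : I -> {malg K[T]}) x :
  (\sum_(i <- r) F i)@_x = \sum_(i <- r) (F i)@_x.
Proof.
elim: r => [|i r IH]; first by rewrite !big_nil mcoeff0.
by rewrite !big_cons mcoeffD IH.
Qed.

Lemma pm_coef (t : T) (c : K) (g : {malg K[T]}) x :
  (pm << c *g t >> g)@_x = c * \sum_(b <- msupp g) << g@_b *g add t b >>@_x.
Proof.
rewrite /pm msuppU; case: eqP => [->|/eqP Hc].
  by rewrite big_nil mcoeff0 mul0r.
rewrite big_seq_fset1 mcoeff_sum mulr_sumr; apply: eq_bigr => b _.
rewrite mcoeffUU !mcoeffU; by rewrite mulrnAr.
Qed.

Lemma pm_at (t : T) (c : K) (g : {malg K[T]}) b :
  injective (add t) -> (pm << c *g t >> g)@_(add t b) = c * g@_b.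
Proof.
move=> inj; rewrite pm_coef; congr (_ * _).
rewrite {3}(monalgE g) mcoeff_sum; apply: eq_bigr => b' _.
by rewrite !mcoeffU (inj_eq inj).
Qed.

Lemma sum_neq0 (I : eqType) (r : seq I) (F : I -> K) :
  \sum_(i <- r) F i != 0 -> exists2 i, i \in r & F i != 0.
Proof.
elim: r => [|i r IH]; first by rewrite big_nil eqxx.
rewrite big_cons; case: (eqVneq (F i) 0) => [->|Hi] H.
  by rewrite add0r in H; case: (IH H) => j Hj Fj; exists j; rewrite // inE Hj orbT.
by exists i; rewrite ?mem_head.
Qed.

Lemma pm_supp (t : T) (c : K) (g : {malg K[T]}) x :
  (pm << c *g t >> g)@_x != 0 -> exists2 b, b \in msupp g & x = add t b.
Proof.
rewrite pm_coef => H.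
have : \sum_(b <- msupp g) << g@_b *g add t b >>@_x != 0.
  by apply: contraNneq H => ->; rewrite mulr0.
case/sum_neq0 => b Hb; rewrite mcoeffU; case: (eqVneq (add t b) x) => [E _|NE]; first by exists b.
by move=> H0; exfalso; move: H0; rewrite (mulr0n (g@_b)) eqxx.
Qed.

Lemma pm_scale (t : T) (c : K) (g : {malg K[T]}) x :
  (pm << c *g t >> g)@_x = c * (pm << t >> g)@_x.
Proof. by rewrite !pm_coef mul1r. Qed.

Lemma pm_unit (z : T) (c : K) (g : {malg K[T]}) :
  (forall x, add z x = x) -> pm << c *g z >> g = c *: g.
Proof.
move=> Hz; apply/malgP => x; rewrite mcoeffZ.
have inj : injective (add z) by move=> a b; rewrite !Hz.
by rewrite -{1}(Hz x) pm_at.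
Qed.
Lemma pm_sub (f g : {malg K[T]}) t c x :
  (f + pm << (- c) *g t >> g)@_x = f@_x - c * (pm << t >> g)@_x.
Proof. by rewrite mcoeffD pm_scale mulNr. Qed.
End Generic.

Section Poly.
Variable n : nat.
Variable K : fieldType.

Lemma pmulE (f g : spoly n K) : pmul f g = pm (@eadd n) f g.
Proof. by []. Qed.

Lemma eadd_inj (t : expo n) : injective (eadd t).
Proof.
case: t => t1 t2 [a1 a2] [b1 b2]; rewrite /eadd /= => [[/addrI E1 /addnI E2]].
by rewrite E1 E2.
Qed.

Lemma eaddC (a b : expo n) : eadd a b = eadd b a.
Proof. by rewrite /eadd addrC addnC. Qed.

Lemma pmulU_at (t : expo n) (c : K) (g : spoly n K) b :
  (pmul << c *g t >> g)@_(eadd t b) = c * g@_b.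
Proof. rewrite pmulE; exact: (pm_at c g b (@eadd_inj t)). Qed.

Lemma pmulU_supp (t : expo n) (c : K) (g : spoly n K) x :
  (pmul << c *g t >> g)@_x != 0 -> exists2 b, b \in msupp g & x = eadd t b.
Proof. rewrite pmulE; exact: pm_supp. Qed.

Lemma pmulU_scale (t : expo n) (c : K) (g : spoly n K) x :
  (pmul << c *g t >> g)@_x = c * (pmul (Xm K t) g)@_x.
Proof. exact: (pm_scale (@eadd n) t c g x). Qed.

Lemma pmulC (c : K) (g : spoly n K) : pmul << c *g (e0 n) >> g = c *: g.
Proof.
rewrite pmulE; apply: pm_unit => x.
by case: x => x1 x2; rewrite /eadd /= add0r add0n.
Qed.

Lemma pmul_sub (f g : spoly n K) t c x :
  (f + pmul << (- c) *g t >> g)@_x = f@_x - c * (pmul (Xm K t) g)@_x.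
Proof. exact: (pm_sub (@eadd n) f g t c x). Qed.

Variable A : seq 'rV[int]_n.
Variable ltM : rel 'rV[int]_n.

Lemma inKSh_U (c : K) t : inSh A t -> inKSh A (<< c *g t >> : spoly n K).
Proof.
move=> Ht e; rewrite msuppU; case: eqP => _; first by rewrite inE.
by rewrite inE => /eqP ->.
Qed.

Lemma ideal_scale I (c : K) (f : spoly n K) : is_ideal A I -> I f -> I (c *: f).
Proof.
case=> _ _ _ Hm Hf; rewrite -pmulC; apply: Hm Hf; apply: inKSh_U.
by rewrite /inSh /= inE.
Qed.

Lemma pdeg_homog (g : spoly n K) d e : (forall e, e \in msupp g -> e.2 = d) ->
  e \in msupp g -> pdeg g = d.
Proof.
move=> H He; apply/eqP; rewrite eqn_leq; apply/andP; split.
  by apply/bigmax_leqP_seq => i Hi _; rewrite H.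
by rewrite -(H e He); apply: (leq_bigmax_seq (F := fun e : expo n => e.2)).
Qed.

End Poly.


Section LMsec.
Variable n : nat.
Variable K : fieldType.
Variable A : seq 'rV[int]_n.
Variable ltM : rel 'rV[int]_n.
Hypothesis Hmo : monomial_order A ltM.

Lemma supp_cons (g : spoly n K) : g != 0 ->
  exists h l, enum_fset (msupp g) = h :: l.
Proof.
move=> gn0; case E: (enum_fset (msupp g)) => [|h l]; last by exists h, l.
exfalso; move/eqP: gn0; apply; rewrite (monalgE g) E.
exact: big_nil.
Qed.

Lemma LM_spec (g : spoly n K) : g != 0 -> inKSh A g ->
  LM A ltM g \in msupp g /\
  forall e, e \in msupp g -> e = LM A ltM g \/ gsp_lt A ltM e (LM A ltM g).
Proof.
move=> gn0 Hg; have [h [l E]] := supp_cons gn0.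
have memE : forall x, (x \in msupp g) = (x \in h :: l).
  by move=> x; rewrite -E.
rewrite /LM E /=.
have Hall : all (inSh A) (h :: h :: l).
  apply/allP => x; rewrite inE => /orP [/eqP ->|Hx]; apply: Hg; rewrite memE ?mem_head //.
have [H1 H2] := foldl_max (gsp_trans Hmo) (gsp_total Hmo) Hall.
split.
  rewrite memE; move: H1; rewrite !inE orbA orbb; exact.
by move=> e; rewrite memE => He; apply: H2; rewrite inE He orbT.
Qed.
End LMsec.


Section LinAlg.
Variable K : fieldType.

Lemma piv_before m c (M : 'M[K]_(m, c)) i (j : 'I_c) : (j < piv M i)%N -> M i j = 0.
Proof.
move=> H; have := before_find j H; rewrite nth_ord_enum => /negbFE/eqP //.
Qed.

Lemma piv_at m c (M : 'M[K]_(m, c)) i (j : 'I_c) : nat_of_ord j = piv M i -> M i j != 0.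
Proof.
move=> H.
have Hh : has (fun j => M i j != 0) (enum 'I_c).
  by rewrite has_find size_enum_ord -/(piv M i) -H ltn_ord.
have := nth_find j Hh; rewrite -/(piv M i) -H nth_ord_enum //.
Qed.

Lemma piv_big m c (M : 'M[K]_(m, c)) i : (c <= piv M i)%N -> forall j, M i j = 0.
Proof. move=> H j; apply: piv_before; exact: leq_trans (ltn_ord j) H. Qed.

Lemma piv_eq m c (M : 'M[K]_(m, c)) i (j : 'I_c) : M i j != 0 ->
  (forall j' : 'I_c, (j' < j)%N -> M i j' = 0) -> piv M i = j.
Proof.
move=> Hj Hb; apply/eqP; rewrite eqn_leq; apply/andP; split.
  by rewrite leqNgt; apply/negP => /piv_before; apply/eqP.
rewrite leqNgt; apply/negP => Hlt.
have Hc : (piv M i < c)%N by exact: ltn_trans Hlt (ltn_ord j).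
by move: (piv_at (M := M) (i := i) (j := Ordinal Hc) erefl); rewrite Hb ?eqxx.
Qed.

Lemma reduced_col m c (N : 'M[K]_(m, c)) k (j : 'I_c) :
  reduced_row_echelon N -> nat_of_ord j = piv N k -> forall l, N l j = (l == k)%:R.
Proof.
case=> _ Hred Hj l; have [H1 H2] := Hred _ _ Hj.
by case: (eqVneq l k) => [->|/H2 ->] //.
Qed.

Lemma piv_inj m c (N : 'M[K]_(m, c)) k k' :
  reduced_row_echelon N -> (piv N k < c)%N -> piv N k = piv N k' -> k = k'.
Proof.
move=> Hr Hc E.
have := reduced_col (j := Ordinal Hc) Hr (erefl _) k'.
have := reduced_col (j := Ordinal Hc) Hr E k'.
rewrite eqxx => ->; case: (eqVneq k' k) => // _ /eqP. by rewrite mulr1n mulr0n oner_eq0.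
Qed.

Lemma rep_coef m c (N : 'M[K]_(m, c)) (u : 'rV_m) k (j : 'I_c) :
  reduced_row_echelon N -> nat_of_ord j = piv N k -> (u *m N) 0 j = u 0 k.
Proof.
move=> Hr Hj; rewrite !mxE (bigD1 k) //= (reduced_col Hr Hj) eqxx mulr1.
rewrite big1 ?addr0 // => l Hl; rewrite (reduced_col Hr Hj) (negbTE Hl) mulr0 //.
Qed.

Lemma piv_exists m1 m2 c (N1 : 'M[K]_(m1, c)) (N2 : 'M[K]_(m2, c)) i :
  reduced_row_echelon N1 -> reduced_row_echelon N2 -> (N1 <= N2)%MS ->
  (piv N1 i < c)%N -> exists k, piv N2 k = piv N1 i.
Proof.
move=> R1 R2 S12 Hc.
have /submxP [u Hu] : (row i N1 <= N2)%MS by exact: submx_trans (row_sub i N1) S12.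
case: (boolP [exists k, piv N2 k == piv N1 i]) => [/existsP [k /eqP Hk]|Hn].
  by exists k.
exfalso; set pj := Ordinal Hc.
have := piv_at (M := N1) (i := i) (j := pj) erefl; apply/negP; rewrite negbK.
have -> : N1 i pj = row i N1 0 pj by rewrite mxE.
rewrite Hu mxE; apply/eqP; apply: big1 => k _.
case: (ltngtP (piv N2 k) (piv N1 i)) => Hk.
- have Hkc : (piv N2 k < c)%N by exact: ltn_trans Hk Hc.
  have := rep_coef u (j := Ordinal Hkc) R2 (erefl _).
  rewrite -Hu mxE (piv_before (j := Ordinal Hkc)) // => <-; rewrite mul0r //.
- by rewrite (piv_before (j := pj)) ?mulr0.
- by move: Hn; rewrite negb_exists => /forallP /(_ k); rewrite Hk eqxx.
Qed.

Lemma rref_row_in m1 m2 c (N1 : 'M[K]_(m1, c)) (N2 : 'M[K]_(m2, c)) i :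
  reduced_row_echelon N1 -> reduced_row_echelon N2 -> (N1 <= N2)%MS -> (N2 <= N1)%MS ->
  (piv N1 i < c)%N -> exists k, row k N2 = row i N1.
Proof.
move=> R1 R2 S12 S21 Hc.
have [k Hk] := piv_exists R1 R2 S12 Hc.
exists k; apply/eqP; rewrite eq_sym -subr_eq0; apply/eqP.
have /submxP [v Hv] : (row i N1 - row k N2 <= N1)%MS.
  apply: addmx_sub; first exact: row_sub.
  rewrite eqmx_opp; exact: submx_trans (row_sub k N2) S21.
rewrite Hv mulmx_sum_row; apply: big1 => l _.
case: (ltnP (piv N1 l) c) => Hl; last first.
  by apply/rowP => j; rewrite !mxE (piv_big Hl) mulr0.
have [k' Hk'] := piv_exists R1 R2 S12 Hl.
have := rep_coef v (j := Ordinal Hl) R1 (erefl _).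
rewrite -Hv !mxE (reduced_col (j := Ordinal Hl) R1 (erefl _) i).
rewrite (reduced_col (j := Ordinal Hl) R2 (esym Hk') k).
have -> : (i == l) = (k == k').
  apply/eqP/eqP => [E|E].
    apply: (piv_inj R2); first by rewrite Hk.
    by rewrite Hk Hk' E.
  apply: (piv_inj R1) => //; by rewrite -Hk -Hk' E.
by rewrite subrr => <-; rewrite scale0r.
Qed.

Lemma echelon_free m c (M : 'M[K]_(m, c)) :
  (forall i, piv M i < c)%N ->
  (forall i1 i2 : 'I_m, (i1 < i2)%N -> (piv M i1 < piv M i2)%N) -> row_free M.
Proof.
move=> Hc Hinc.
have key : forall v : 'rV_m, v *m M = 0 -> v = 0.
  move=> v Hv.
  have H : forall k (i : 'I_m), (i < k)%N -> v 0 i = 0.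
    elim=> [|k IH] i //; rewrite ltnS leq_eqVlt => /orP [/eqP Ei|]; last exact: IH.
    have := congr1 (fun w : 'rV[K]_c => w 0 (Ordinal (Hc i))) Hv; rewrite !mxE.
    rewrite (bigD1 i) //= big1 ?addr0.
      move/eqP; rewrite mulf_eq0 => /orP [/eqP //|].
      by rewrite (negbTE (piv_at (M := M) (i := i) (j := Ordinal (Hc i)) erefl)).
    move=> l Hl; case: (ltngtP l i) => Hli.
    - by rewrite IH ?mul0r // -Ei.
    - by rewrite (piv_before (j := Ordinal (Hc i))) ?mulr0 //= Hinc.
    - by move: Hl; rewrite (val_inj Hli) eqxx.
  by apply/rowP => i; rewrite (H i.+1) ?mxE.
rewrite -kermx_eq0 -submx0; apply/row_subP => i.
rewrite submx0; apply/eqP; apply: key; apply/sub_kermxP; exact: row_sub.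
Qed.
End LinAlg.


Lemma filter_index (T : eqType) (P : pred T) (s : seq T) x0 i1 i2 :
  uniq s -> (i1 < i2)%N -> (i2 < size (filter P s))%N ->
  (index (nth x0 (filter P s) i1) s < index (nth x0 (filter P s) i2) s)%N.
Proof.
elim: s i1 i2 => [|x s IH] i1 i2 //= /andP [xn Us].
have Hnx : forall i, (i < size (filter P s))%N -> (x == nth x0 (filter P s) i) = false.
  move=> i Hi; apply/negP => /eqP E; move: xn; rewrite E.
  by move: (mem_nth x0 Hi); rewrite mem_filter => /andP [_ ->].
case: (P x) => /=.
  case: i1 i2 => [|i1] [|i2] //=; first by rewrite eqxx => _ Hi2; rewrite Hnx.
  move=> Hlt Hi2; rewrite !Hnx //; first by rewrite ltnS IH.
  exact: ltn_trans Hlt Hi2.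
move=> Hlt Hi2; rewrite !Hnx //; first by rewrite ltnS IH.
exact: ltn_trans Hlt Hi2.
Qed.

Lemma esub_eadd n (a b : expo n) : esub (eadd a b) a = b.
Proof.
case: a b => [a1 a2] [b1 b2]; rewrite /esub /eadd /=.
by rewrite [a1 + b1]addrC addrK addKn.
Qed.

Section Shift.
Variable n : nat.
Variable K : fieldType.
Variable A : seq 'rV[int]_n.
Variable ltM : rel 'rV[int]_n.
Hypothesis Hmo : monomial_order A ltM.

Lemma shift_props (g : spoly n K) (t : expo n) : g != 0 -> inKSh A g -> inSh A t ->
  deltaA A ((LM A ltM g).1 + t.1) = (deltaA A (LM A ltM g).1 + deltaA A t.1)%N ->
  [/\ (pmul (Xm K t) g)@_(eadd t (LM A ltM g)) = g@_(LM A ltM g),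
      g@_(LM A ltM g) != 0 &
      forall x, (pmul (Xm K t) g)@_x != 0 ->
        [/\ inSh A x, exists2 b, b \in msupp g & x = eadd t b &
            x = eadd t (LM A ltM g) \/ gsp_lt A ltM x (eadd t (LM A ltM g))]].
Proof.
move=> gn0 Hg Ht Hd.
have [HL HLm] := LM_spec Hmo gn0 Hg.
split.
- by rewrite /Xm pmulU_at mul1r.
- by rewrite mcoeff_neq0.
move=> x /pmulU_supp [b Hb ->]; split.
- by apply: inSh_add => //; exact: Hg.
- by exists b.
case: (HLm b Hb) => [->|Hlt]; first by left.
right; apply: gsp_shift => //; exact: Hg.
Qed.

Lemma shift_zero (g : spoly n K) (t : expo n) x : g != 0 -> inKSh A g -> inSh A t ->
  deltaA A ((LM A ltM g).1 + t.1) = (deltaA A (LM A ltM g).1 + deltaA A t.1)%N ->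
  inSh A x -> gsp_lt A ltM (eadd t (LM A ltM g)) x -> (pmul (Xm K t) g)@_x = 0.
Proof.
move=> gn0 Hg Ht Hd Hx Hlt; apply/eqP; apply/negP => /negP Hnz.
have [_ _ H] := shift_props gn0 Hg Ht Hd.
have [Hx' _ [E|Hlt']] := H x Hnz.
  by move: Hlt; rewrite -E; apply/negP; exact: gsp_irr.
have HLt : inSh A (eadd t (LM A ltM g)).
  by case: (LM_spec Hmo gn0 Hg) => HL _; apply: inSh_add => //; exact: (Hg _ HL).
have := gsp_trans Hmo Hx HLt Hx Hlt' Hlt.
by apply/negP; exact: gsp_irr.
Qed.
End Shift.
Unset Implicit Arguments.
Theorem mainTheorem9 (n : nat) (K : fieldType) (R : realFieldType)
  (V : seq 'rV[R]_n) (A : seq 'rV[int]_n) (ltM : rel 'rV[int]_n)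
  (I : spoly n K -> Prop) (G : seq (spoly n K)) (D : nat)
  (cols : seq (expo n)) (assoc : expo n -> spoly n K) :
  [pchar K] =i pred0 ->
  lattice_points_of V A -> (0 : 'rV[int]_n) \in A ->
  S_pointed A -> Sh_pointed A ->
  monomial_order A ltM ->
  homog_ideal A I ->
  (forall g, g \in G -> homog g) ->
  sparse_GB A ltM I G ->
  uniq cols ->
  (forall e, (e \in cols) = inSh A e && (e.2 == D)) ->
  sorted (fun a b => gsp_lt A ltM b a) cols ->
  let inN (m : expo n) :=
    pb (exists2 g, g \in G & g != 0 /\ ddvd A (LM A ltM g) m) in
  (forall m, m \in cols -> inN m ->
     [/\ assoc m \in G, assoc m != 0 & ddvd A (LM A ltM (assoc m)) m]) ->
  let rowsP := [seq pmul (Xm K (esub m (LM A ltM (assoc m)))) (assoc m)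
               | m <- cols & inN m] in
  let rowsM := flatten [seq [seq pmul (Xm K (u, (D - pdeg g)%N)) g
                            | u <- undup (sums A (D - pdeg g))]
                       | g <- G & (pdeg g <= D)%N] in
  let M' := macaulay rowsP cols in
  let M := macaulay rowsM cols in
  (forall N' N, rref_of M' N' -> rref_of M N ->
     forall p, Rows N' p <-> Rows N p)
  /\ \rank M' = minn (size rowsP) (size cols)
  /\ row_echelon M'.
Proof.
move=> _ _ A0 _ _ Hmo [Hid Hhc] HGh [GI Ggen GLM] Ucols Hcols Scols inN Hassoc
  rowsP rowsM M' M.
have Hid' := Hid; case: Hid' => IKSh I0 Iadd Imul.
pose vec (f : spoly n K) : 'rV[K]_(size cols) := \row_j f@_(nth (e0 n) cols j).
have rowE : forall rows (i : 'I_(size rows)), row i (macaulay rows cols) = vec rows`_i.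
  by move=> rows i; apply/rowP => j; rewrite !mxE.
have colsSh : forall x, x \in cols -> inSh A x by move=> x; rewrite Hcols => /andP [].
have colsD : forall x, x \in cols -> x.2 = D by move=> x; rewrite Hcols => /andP [_ /eqP].
have Hsort : forall j j', (j < j')%N -> (j' < size cols)%N ->
    gsp_lt A ltM (nth (e0 n) cols j') (nth (e0 n) cols j).
  move=> j j' Hjj' Hj'.
  have Htr : {in inSh A & &, transitive (fun a b => gsp_lt A ltM b a)}.
    by move=> y x z Hy Hx Hz H1 H2; exact: (gsp_trans Hmo Hz Hy Hx H2 H1).
  have Hall : all (inSh A) cols by apply/allP.
  apply: (sorted_ltn_nth_in Htr (e0 n) Hall Scols) => //.
  by rewrite inE (ltn_trans Hjj' Hj').
have Hrow : forall m, m \in cols -> inN m ->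
  let g := assoc m in let t := esub m (LM A ltM g) in
  [/\ g \in G, g != 0, inKSh A g, inSh A t & m = eadd t (LM A ltM g) /\
      deltaA A ((LM A ltM g).1 + t.1) = (deltaA A (LM A ltM g).1 + deltaA A t.1)%N].
  move=> m Hm HN g t.
  have [Hg gn0 [t' [Ht' Em Hd]]] := Hassoc m Hm HN.
  have Et : t = t' by rewrite /t -Em esub_eadd.
  split => //.
  - by apply: IKSh; apply: GI.
  - by rewrite Et.
  - split; first by rewrite Et -Em eaddC.
    have E1 : m.1 = (LM A ltM (assoc m)).1 + t'.1 by rewrite -{1}Em.
    by rewrite Et /g -E1; rewrite /delta in Hd; exact: esym Hd.
set filt := [seq m <- cols | inN m].
have sizeP : size rowsP = size filt by rewrite size_map.
have Hmi : forall i : 'I_(size rowsP), nth (e0 n) filt i \in cols /\ inN (nth (e0 n) filt i).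
  move=> i; have := mem_nth (e0 n) (_ : (i < size filt)%N).
  rewrite -sizeP ltn_ord => /(_ isT); rewrite mem_filter => /andP [-> ->] //.
have rowsPE : forall i : 'I_(size rowsP), rowsP`_i =
    pmul (Xm K (esub (nth (e0 n) filt i) (LM A ltM (assoc (nth (e0 n) filt i)))))
      (assoc (nth (e0 n) filt i)).
  by move=> i; rewrite (nth_map (e0 n)) // -sizeP ltn_ord.
have pivE : forall i : 'I_(size rowsP), piv M' i = index (nth (e0 n) filt i) cols.
  move=> i; have [Hm HN] := Hmi i.
  have [Hg gn0 HgK Ht [Em Hd]] := Hrow _ Hm HN.
  have [Hat Hlc _] := shift_props (K := K) Hmo gn0 HgK Ht Hd.
  have Hjm : (index (nth (e0 n) filt i) cols < size cols)%N by rewrite index_mem.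
  apply: (piv_eq (j := Ordinal Hjm)).
    rewrite /M' /macaulay mxE rowsPE /= nth_index //.
    by move: Hlc; rewrite -Hat -Em.
  move=> j' /= Hj'.
  have Hj's : (j' < size cols)%N := ltn_trans Hj' Hjm.
  rewrite /M' /macaulay mxE rowsPE.
  apply: (shift_zero Hmo gn0 HgK Ht Hd); first by apply: colsSh; exact: mem_nth.
  rewrite -Em; have := Hsort _ _ Hj' Hjm; rewrite nth_index //.
have Hech : row_echelon M'.
  move=> i1 i2 H12 _; rewrite !pivE; apply: filter_index => //.
  by rewrite -sizeP ltn_ord.
have Hpc : forall i, (piv M' i < size cols)%N.
  by move=> i; rewrite pivE index_mem; case: (Hmi i).
have Hrank : \rank M' = size rowsP.
  apply/eqP; apply: echelon_free => // i1 i2 H12; exact: Hech.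
split; last split => //; last first.
  rewrite Hrank; apply/esym/minn_idPl; rewrite -Hrank; exact: rank_leq_col.
have pdegL : forall g, g \in G -> g != 0 -> pdeg g = (LM A ltM g).2.
  move=> g Hg gn0; have [d Hd] := HGh g Hg.
  have [HL _] := LM_spec (K := K) Hmo gn0 (IKSh g (GI g Hg)).
  by rewrite (pdeg_homog Hd HL) (Hd _ HL).
have S1 : (M' <= M)%MS.
  apply/row_subP => i; rewrite rowE.
  suff Hin : rowsP`_i \in rowsM.
    set r := rowsP`_i in Hin *.
    rewrite -(nth_index 0 Hin).
    have Hk : (index r rowsM < size rowsM)%N by rewrite index_mem.
    by rewrite -(rowE _ (Ordinal Hk)) row_sub.
  have [Hm HN] := Hmi i.
  have [Hg gn0 HgK Ht [Em Hd]] := Hrow _ Hm HN.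
  rewrite rowsPE.
  move: Ht Em Hd; set m := nth (e0 n) filt i; set g := assoc m.
  set L := LM A ltM g; set t := esub m L => Ht Em Hd.
  have HD : m.2 = D by apply: colsD.
  have Hpd : pdeg g = L.2 by exact: pdegL.
  have Ht2 : t.2 = (D - pdeg g)%N by rewrite Hpd -HD Em /eadd /= addnK.
  apply/flatten_mapP; exists g.
    by rewrite mem_filter Hg Hpd -HD Em /eadd /= leq_addl.
  apply/mapP; exists t.1; first by rewrite mem_undup -Ht2.
  by rewrite -Ht2 -surjective_pairing.
have base : forall k (f : spoly n K), (size cols <= k)%N ->
    (forall j, (j < k)%N -> f@_(nth (e0 n) cols j) = 0) -> (vec f <= M')%MS.
  move=> k f Hk Hz; suff -> : vec f = 0 by rewrite sub0mx.
  by apply/rowP => j; rewrite !mxE Hz //; exact: leq_trans (ltn_ord j) Hk.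
have red : forall d k (f : spoly n K), (size cols - k <= d)%N -> I f ->
    (forall x, f@_x != 0 -> x \in cols) ->
    (forall j, (j < k)%N -> f@_(nth (e0 n) cols j) = 0) -> (vec f <= M')%MS.
  elim=> [|d IH] k f Hd If Hsupp Hz.
    by apply: (base k) => //; rewrite -subn_eq0 -leqn0.
  case: (leqP (size cols) k) => Hk; first exact: (base k).
  have Hd' : (size cols - k.+1 <= d)%N.
    by rewrite subnS; move: Hd; case: (size cols - k)%N.
  have Hmc : nth (e0 n) cols k \in cols by exact: mem_nth.
  case: (eqVneq (f@_(nth (e0 n) cols k)) 0) => Hfm.
    apply: (IH k.+1) => // j; rewrite ltnS leq_eqVlt => /orP [/eqP ->|] //.
    exact: Hz.
  move: Hmc Hfm; set m := nth (e0 n) cols k => Hmc Hfm.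
  have fn0 : f != 0 by apply: contraNneq Hfm => ->; rewrite mcoeff0.
  have [HLf HLfm] := LM_spec (K := K) Hmo fn0 (IKSh f If).
  have LMm : LM A ltM f = m.
    have HLc : LM A ltM f \in cols by apply: Hsupp; rewrite mcoeff_neq0.
    case: (eqVneq (LM A ltM f) m) => // Hne; exfalso.
    have Hm_in : m \in msupp f by rewrite -mcoeff_neq0.
    case: (HLfm m Hm_in) => [E|Hlt]; first by rewrite E eqxx in Hne.
    have Hj0 : (index (LM A ltM f) cols < size cols)%N by rewrite index_mem.
    have Hkj : (k < index (LM A ltM f) cols)%N.
      rewrite ltn_neqAle; apply/andP; split.
        apply: contra Hne => /eqP Ek; apply/eqP.
        by rewrite /m Ek nth_index.
      rewrite leqNgt; apply/negP => Hlt'.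
      have := Hz _ Hlt'; rewrite nth_index // => /eqP.
      by rewrite mcoeff_eq0 HLf.
    have := Hsort _ _ Hkj Hj0; rewrite nth_index // -/m => Hlt2.
    have := gsp_trans Hmo (colsSh _ Hmc) (colsSh _ HLc) (colsSh _ Hmc) Hlt Hlt2.
    by apply/negP; apply: gsp_irr => //; exact: colsSh.
  have HN : inN m.
    rewrite /inN; apply: pbP; have [g0 Hg0 [g0n Hdv]] := GLM f If fn0.
    by exists g0 => //; split => //; rewrite -LMm.
  have [Hg gn0 HgK Ht [Em Hdl]] := Hrow _ Hmc HN.
  have [Hat Hlc Hsp] := shift_props (K := K) Hmo gn0 HgK Ht Hdl.
  have Hmf : m \in filt by rewrite mem_filter HN Hmc.
  have Hi : (index m filt < size rowsP)%N by rewrite sizeP index_mem.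
  have Hri : row (Ordinal Hi) M' = vec (pmul (Xm K (esub m (LM A ltM (assoc m)))) (assoc m)).
    by rewrite rowE rowsPE /= nth_index.
  move: Ht Hdl Em Hat Hlc Hsp Hri HgK gn0 Hg.
  set g := assoc m; set L := LM A ltM g; set t := esub m L.
  move=> Ht Hdl Em Hat Hlc Hsp Hri HgK gn0 Hg.
  set c := f@_m / g@_L.
  set f' := f + pmul << (- c) *g t >> g.
  have If' : I f' by apply: Iadd => //; apply: Imul; [exact: inKSh_U | exact: GI].
  have cf' : forall x, f'@_x = f@_x - c * (pmul (Xm K t) g)@_x.
    move=> x; exact: pmul_sub.
  have Hvf : vec f = vec f' + c *: row (Ordinal Hi) M'.
    by rewrite Hri; apply/rowP => j; rewrite !mxE cf' subrK.
  rewrite Hvf; apply: addmx_sub; last by apply: scalemx_sub; exact: row_sub.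
  apply: (IH k.+1) => //.
    move=> x; rewrite cf'; case: (eqVneq (f@_x) 0) => Hfx; last by move=> _; exact: Hsupp.
    rewrite Hfx sub0r oppr_eq0 mulf_eq0 negb_or => /andP [_ Hp].
    have [Hx [b Hb Exb] _] := Hsp x Hp.
    rewrite Hcols Hx /=; apply/eqP.
    have [dd Hdd] := HGh g Hg.
    have [HL _] := LM_spec (K := K) Hmo gn0 HgK.
    rewrite -(colsD _ Hmc) Em Exb /eadd /= (Hdd _ Hb) -(Hdd _ HL) //.
  move=> j; rewrite ltnS leq_eqVlt => /orP [/eqP ->|Hjk].
    rewrite cf' -/m; move: Hat; rewrite -Em => ->.
    by rewrite /c divfK // subrr.
  rewrite cf' Hz // (shift_zero Hmo gn0 HgK Ht Hdl) ?mulr0 ?subrr //.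
    by apply: colsSh; apply: mem_nth; exact: ltn_trans Hjk Hk.
  rewrite -Em; exact: Hsort.
have S2 : (M <= M')%MS.
  apply/row_subP => k; rewrite rowE.
  have : rowsM`_k \in rowsM by apply: mem_nth.
  move=> /flatten_mapP [g]; rewrite mem_filter => /andP [HgD Hg] /mapP [u Hu ->].
  have HgK := IKSh g (GI g Hg).
  have Hut : inSh A (u, (D - pdeg g)%N) by rewrite /inSh /= -mem_undup.
  apply: (red (size cols) 0) => //.
  - by rewrite subn0.
  - apply: Imul; [exact: inKSh_U | exact: GI].
  - move=> x /pmulU_supp [b Hb ->].
    rewrite Hcols inSh_add //=; last exact: HgK.
    have [dd Hdd] := HGh g Hg.
    by rewrite (Hdd _ Hb) -(pdeg_homog Hdd Hb) subnK.
have Rtr : forall m1 m2 (N1 : 'M[K]_(m1, size cols)) (N2 : 'M[K]_(m2, size cols)) p,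
    reduced_row_echelon N1 -> reduced_row_echelon N2 ->
    (N1 <= N2)%MS -> (N2 <= N1)%MS -> Rows N1 p -> Rows N2 p.
  move=> m1 m2 N1 N2 p R1 R2 S12 S21 [pn0 [i Ep]].
  have Hc : (piv N1 i < size cols)%N.
    rewrite ltnNge; apply/negP => Hc; move: pn0; rewrite Ep /row_poly big1 ?eqxx //.
    by move=> j _; rewrite (piv_big Hc) monalgU0.
  have [k Ek] := rref_row_in R1 R2 S12 S21 Hc.
  split => //; exists k; rewrite Ep /row_poly; apply: eq_bigr => j _.
  by have := congr1 (fun r : 'rV[K]_(size cols) => r 0 j) Ek; rewrite !mxE => ->.
move=> N' N [R1 /andP [E1 E1']] [R2 /andP [E2 E2']] p.
have SNN : (N' <= N)%MS.
  exact: submx_trans E1 (submx_trans S1 E2').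
have SNN' : (N <= N')%MS.
  exact: submx_trans E2 (submx_trans S2 E1').
split; exact: Rtr.
Qed.
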